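(* Let $K=3$ and let $l>m\ge s$ be nonnegative integers. Then \[ h(l,\,m+1,\,s)\ \ge\ h(l+1,\,m,\,s)\qquad\text{and}\qquad h(l,\,m,\,s+1)\ \ge\ h(l+1,\,m,\,s). \]
   Context: For a vector $\vec n=(n_1,n_2,n_3)$ of nonnegative integers, the following random process is run: stocks start at $\vec n^{(0)}=\vec n$; at each step $t=1,2,\dots$, as long as at least two coordinates of $\vec n^{(t-1)}$ are nonzero, an index $i$ is chosen uniformly at random (independently of the past) among the indices with $n_i^{(t-1)}>0$, and $\vec n^{(t)}=\vec n^{(t-1)}-\vec e_i$ ($\vec e_i$ the $i$-th standard unit vector). The process stops at the first time $T$ at which at most one coordinate is nonzero, and $h(\vec n)=\mathbb{E}[T]$. Equivalently, with $\operatorname{support}(\vec n)=\{i:n_i\ne 0\}$: $h(\vec n)=0$ if $|\operatorname{support}(\vec n)|\le1$, and otherwise $h(\vec n)=1+\frac{1}{|\operatorname{support}(\vec n)|}\sum_{i\in\operatorname{support}(\vec n)}h(\vec n-\vec e_i)$. Note $h$ is symmetric in its arguments. *)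

(* Defs.v *)
From mathcomp Require Import all_boot all_order all_algebra.
Set Implicit Arguments. Unset Strict Implicit. Unset Printing Implicit Defensive.
Import Order.TTheory GRing.Theory Num.Theory.
Local Open Scope ring_scope.

Definition supp_size (n1 n2 n3 : nat) : nat :=
  ((n1 != 0%N) + (n2 != 0%N) + (n3 != 0%N))%N.

(* h computed by recursion with fuel; fuel n1+n2+n3 suffices since each
   step decreases the total stock by one. *)
Fixpoint h_fuel (fuel : nat) (n1 n2 n3 : nat) : rat :=
  match fuel with
  | 0%N => 0
  | f.+1 =>
    if (supp_size n1 n2 n3 <= 1)%N then 0
    else 1 + (supp_size n1 n2 n3)%:R^-1 *
         ((if n1 != 0%N then h_fuel f n1.-1 n2 n3 else 0)
        + (if n2 != 0%N then h_fuel f n1 n2.-1 n3 else 0)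
        + (if n3 != 0%N then h_fuel f n1 n2 n3.-1 else 0))
  end.

(* h(n) = E[T], expected stopping time of the depletion process. *)
Definition h (n1 n2 n3 : nat) : rat := h_fuel (n1 + n2 + n3) n1 n2 n3.

(* Main.v *)
Require Import Defs.
From mathcomp Require Import all_boot all_order all_algebra.
From mathcomp Require Import lra zify.
Import Order.TTheory GRing.Theory Num.Theory.
Local Open Scope ring_scope.

Lemma fuel_eq f : forall g n1 n2 n3, (n1 + n2 + n3 <= f)%N -> (n1 + n2 + n3 <= g)%N ->
  h_fuel f n1 n2 n3 = h_fuel g n1 n2 n3.
Proof.
elim: f => [|f IH] [|g] n1 n2 n3 Hf Hg //=.
- have [-> -> ->] : [/\ n1 = 0%N, n2 = 0%N & n3 = 0%N] by split; lia.
  by rewrite /supp_size.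
- have [-> -> ->] : [/\ n1 = 0%N, n2 = 0%N & n3 = 0%N] by split; lia.
  by rewrite /supp_size.
- case: ifP => // _; congr (_ + _ * (_ + _ + _)).
  + case: n1 Hf Hg => //= n1 Hf Hg; apply: IH; lia.
  + case: n2 Hf Hg => //= n2 Hf Hg; apply: IH; lia.
  + case: n3 Hf Hg => //= n3 Hf Hg; apply: IH; lia.
Qed.

Lemma hE n1 n2 n3 : h n1 n2 n3 =
    if (supp_size n1 n2 n3 <= 1)%N then 0
    else 1 + (supp_size n1 n2 n3)%:R^-1 *
         ((if n1 != 0%N then h n1.-1 n2 n3 else 0)
        + (if n2 != 0%N then h n1 n2.-1 n3 else 0)
        + (if n3 != 0%N then h n1 n2 n3.-1 else 0)).
Proof.
rewrite /h.
case E: (n1 + n2 + n3)%N => [|t].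
  have [-> -> ->] : [/\ n1 = 0%N, n2 = 0%N & n3 = 0%N] by split; lia.
  by rewrite /supp_size.
rewrite /=; case: ifP => // _; congr (_ + _ * (_ + _ + _)).
+ case: n1 E => //= n1 E; apply: fuel_eq; lia.
+ case: n2 E => //= n2 E; apply: fuel_eq; lia.
+ case: n3 E => //= n3 E; apply: fuel_eq; lia.
Qed.

Lemma h3 a b c : h a.+1 b.+1 c.+1 = 1 + 3%:R^-1 * (h a b.+1 c.+1 + h a.+1 b c.+1 + h a.+1 b.+1 c).
Proof. by rewrite hE. Qed.
Lemma h2ab a b : h a.+1 b.+1 0 = 1 + 2%:R^-1 * (h a b.+1 0 + h a.+1 b 0).
Proof. by rewrite hE /= addr0. Qed.
Lemma h2ac a c : h a.+1 0 c.+1 = 1 + 2%:R^-1 * (h a 0 c.+1 + h a.+1 0 c).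
Proof. by rewrite hE /= addr0. Qed.
Lemma h1 a : h a 0 0 = 0.
Proof. by rewrite hE /supp_size; case: a. Qed.

Lemma fuel_ge0 f : forall a b c, 0 <= h_fuel f a b c.
Proof.
elim: f => [|f IH] a b c; first by [].
rewrite /=; case: ifP => // _.
apply: addr_ge0; first by [].
apply: mulr_ge0; first by rewrite invr_ge0 ler0n.
by rewrite !addr_ge0 //; case: ifP.
Qed.
Lemma h_ge0 a b c : 0 <= h a b c. Proof. exact: fuel_ge0. Qed.

Lemma fuel_swap12 f : forall a b c, h_fuel f a b c = h_fuel f b a c.
Proof.
elim: f => [|f IH] a b c //=.
have -> : supp_size b a c = supp_size a b c by rewrite /supp_size; case: (a != 0%N); case: (b != 0%N).
case: ifP => // _; congr (_ + _ * _).
rewrite (IH b.-1 a c) (IH b a.-1 c) (IH b a c.-1); lra.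
Qed.
Lemma fuel_swap23 f : forall a b c, h_fuel f a b c = h_fuel f a c b.
Proof.
elim: f => [|f IH] a b c //=.
have -> : supp_size a c b = supp_size a b c by rewrite /supp_size addnAC.
case: ifP => // _; congr (_ + _ * _).
rewrite (IH a c.-1 b) (IH a.-1 c b) (IH a c b.-1); lra.
Qed.
Lemma swap12 a b c : h a b c = h b a c.
Proof. by rewrite /h fuel_swap12 (addnC a b). Qed.
Lemma swap23 a b c : h a b c = h a c b.
Proof. by rewrite /h fuel_swap23 addnAC. Qed.
Lemma swap13 a b c : h a b c = h c b a.
Proof. by rewrite swap12 swap23 swap12. Qed.


Definition P a b c := (b <= a)%N -> (c <= a.+1)%N -> h a.+1 b c <= h a b.+1 c.
Definition J a b c := (b <= a)%N -> (b <= c)%N ->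
  0 <= (h a b.+1 c.+1 - h a.+1 b c.+1) + (h c b.+1 a.+1 - h c.+1 b a.+1).

Lemma PJ n : (forall a b c, (a + b + c < n)%N -> P a b c) /\
             (forall a b c, (a + b + c.+1 < n)%N -> J a b c).
Proof.
elim: n => [|n [IHP IHJ]]; first by split.
have HP : forall a b c, (a + b + c < n.+1)%N -> P a b c.
  move=> a b c Hs hba hca.
  case: (ltngtP b a) hba => // [hba|->] _; last by rewrite swap12.
  case: a hba hca Hs => [|a1] //= hba hca Hs.
  case: b hba Hs => [|b1] hba Hs; case: c hca Hs => [|c1] hca Hs.
  - by rewrite h1; exact: h_ge0.
  - rewrite (h2ac a1.+1 c1) (h3 a1 0 c1).
    have Z := IHP a1.+1 0 c1 ltac:(lia) ltac:(lia) ltac:(lia).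
    have [hc|ec] : (c1 <= a1)%N \/ c1 = a1.+1 by lia.
    + have X := IHP a1 0 c1.+1 ltac:(lia) ltac:(lia) ltac:(lia).
      have AB := IHP a1.+1 c1 0 ltac:(lia) ltac:(lia) ltac:(lia).
      rewrite (swap23 a1.+2 c1 0) (swap23 a1.+1 c1.+1 0) in AB.
      lra.
    + subst c1.
      have JJ := IHJ a1 0 a1.+1 ltac:(lia) ltac:(lia) ltac:(lia).
      have E := swap13 a1.+2 0 a1.+1.
      lra.
  - rewrite (h2ab a1.+1 b1) (h2ab a1 b1.+1).
    have P1 := IHP a1.+1 b1 0 ltac:(lia) ltac:(lia) ltac:(lia).
    have P2 := IHP a1 b1.+1 0 ltac:(lia) ltac:(lia) ltac:(lia).
    lra.
  - rewrite (h3 a1.+1 b1 c1) (h3 a1 b1.+1 c1).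
    have P1 := IHP a1.+1 b1 c1.+1 ltac:(lia) ltac:(lia) ltac:(lia).
    have P2 := IHP a1.+1 b1.+1 c1 ltac:(lia) ltac:(lia) ltac:(lia).
    have [hc|ec] : (c1 <= a1)%N \/ c1 = a1.+1 by lia.
    + have P3 := IHP a1 b1.+1 c1.+1 ltac:(lia) ltac:(lia) ltac:(lia).
      lra.
    + subst c1.
      have JJ := IHJ a1 b1.+1 a1.+1 ltac:(lia) ltac:(lia) ltac:(lia).
      lra.
split => // a b c Hs hba hbc.
case: (ltngtP b a) hba => // [hba|eba] _; last first.
  subst b.
  have E := swap12 a a.+1 c.+1.
  have Q := HP c a a.+1 ltac:(lia) ltac:(lia) ltac:(lia).
  lra.
case: (ltngtP b c) hbc => // [hbc|ebc] _; last first.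
  subst b.
  have E := swap12 c c.+1 a.+1.
  have Q := HP a c c.+1 ltac:(lia) ltac:(lia) ltac:(lia).
  lra.
case: a hba Hs => [|a1] // hba Hs.
case: c hbc Hs => [|c1] // hbc Hs.
case: b hba hbc Hs => [|b1] hba hbc Hs.
- rewrite (h3 a1 0 c1.+1) (h2ac a1.+1 c1.+1) (h3 c1 0 a1.+1) (h2ac c1.+1 a1.+1).
  have E1 := swap13 c1.+1 0 a1.+2.
  have E2 := swap13 c1.+2 0 a1.+1.
  have J1 := IHJ a1 0 c1.+1 ltac:(lia) ltac:(lia) ltac:(lia).
  have J2 := IHJ c1 0 a1.+1 ltac:(lia) ltac:(lia) ltac:(lia).
  lra.
- rewrite (h3 a1 b1.+1 c1.+1) (h3 a1.+1 b1 c1.+1) (h3 c1 b1.+1 a1.+1) (h3 c1.+1 b1 a1.+1).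
  have J1 := IHJ a1 b1.+1 c1.+1 ltac:(lia) ltac:(lia) ltac:(lia).
  have J2 := IHJ c1 b1.+1 a1.+1 ltac:(lia) ltac:(lia) ltac:(lia).
  have J3 := IHJ a1.+1 b1 c1.+1 ltac:(lia) ltac:(lia) ltac:(lia).
  lra.
Qed.

Theorem lemma3 (l m s : nat) (hlm : (m < l)%N) (hms : (s <= m)%N) :
  h (l + 1) m s <= h l (m + 1) s /\ h (l + 1) m s <= h l m (s + 1).
Proof.
have HP := (PJ (l + m + s).+1).1.
rewrite !addn1; split.
  exact: HP l m s ltac:(lia) ltac:(lia) ltac:(lia).
rewrite (swap23 l.+1) (swap23 l).
exact: HP l s m ltac:(lia) ltac:(lia) ltac:(lia).
Qed.
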